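(* Let $\mathcal{X}$ be a measurable space, $\mathcal{G}$ a class of measurable classifiers $g:\mathcal{X}\to\{-1,+1\}$, and $p\in(0,1)$ a known number. Let $(X'_1,Y'_1),\ldots,(X'_n,Y'_n)$ be i.i.d. copies of a pair $(X',Y')$ valued in $\mathcal{X}\times\{-1,+1\}$ with $p'=\mathbb{P}\{Y'=+1\}$. Let $\varepsilon\in(0,1/2)$ and suppose $p'\in(\varepsilon,1-\varepsilon)$. Define, for $g\in\mathcal{G}$, $$\widetilde{\mathcal{R}}_{w^*,n}(g)=\frac{p}{p'}\frac{1}{n}\sum_{i:Y'_i=+1}\mathbb{I}\{g(X'_i)=-1\}+\frac{1-p}{1-p'}\frac{1}{n}\sum_{i:Y'_i=-1}\mathbb{I}\{g(X'_i)=+1\},$$ $$\widetilde{\mathcal{R}}_{\widehat{w}^*,n}(g)=\frac{p}{n'_+}\sum_{i:Y'_i=+1}\mathbb{I}\{g(X'_i)=-1\}+\frac{1-p}{n'_-}\sum_{i:Y'_i=-1}\mathbb{I}\{g(X'_i)=+1\},$$ where $n'_+=\sum_{i=1}^n\mathbb{I}\{Y'_i=+1\}$ and $n'_-=n-n'_+$. Then for any $\delta\in(0,1)$, as soon as $n\ge 2\log(2/\delta)/\varepsilon^2$, with probability larger than $1-\delta$, $$\sup_{g\in\mathcal{G}}\left|\widetilde{\mathcal{R}}_{\widehat{w}^*,n}(g)-\widetilde{\mathcal{R}}_{w^*,n}(g)\right|\le\frac{2}{\varepsilon^2}\sqrt{\frac{\log(2/\delta)}{2n}}.$$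
   Context: $\mathbb{I}\{\cdot\}$ denotes the indicator function. *)

(* Defs.v *)
From HB Require Import structures.
From mathcomp Require Import all_boot all_order all_algebra.
From mathcomp Require Import all_classical all_reals all_analysis.
Set Implicit Arguments. Unset Strict Implicit. Unset Printing Implicit Defensive.
Import Order.TTheory GRing.Theory Num.Theory.
Local Open Scope classical_set_scope.
Local Open Scope ring_scope.

(* Labels {-1,+1} are encoded as bool: true <-> +1, false <-> -1. *)

Definition mutually_independent {R : realType} d (Omega : measurableType d)
  (P : probability Omega R) d' (T' : measurableType d') (n : nat)
  (Z : 'I_n -> Omega -> T') : Prop :=
  forall (J : {set 'I_n}) (B : 'I_n -> set T'),
    (forall j, measurable (B j)) ->
    P (\big[setI/setT]_(j in J) (Z j @^-1` B j)) =
    (\prod_(j in J) P (Z j @^-1` B j))%E.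

Definition same_distribution {R : realType} d (Omega : measurableType d)
  (P : probability Omega R) d' (T' : measurableType d')
  (Z Z' : Omega -> T') : Prop :=
  forall B : set T', measurable B -> P (Z @^-1` B) = P (Z' @^-1` B).

Section Risks.
Variables (R : realType) (Omega T : Type) (n : nat).
Variables (X : 'I_n -> Omega -> T) (Y : 'I_n -> Omega -> bool).

Definition npos (w : Omega) : R := (\sum_(i < n | Y i w) 1).
Definition nneg (w : Omega) : R := n%:R - npos w.

Definition err_pos (g : T -> bool) (w : Omega) : R :=
  \sum_(i < n | Y i w) (if g (X i w) then 0 else 1).
Definition err_neg (g : T -> bool) (w : Omega) : R :=
  \sum_(i < n | ~~ Y i w) (if g (X i w) then 1 else 0).

Definition risk_wstar (p p' : R) (g : T -> bool) (w : Omega) : R :=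
  p / p' * (n%:R^-1 * err_pos g w) + (1 - p) / (1 - p') * (n%:R^-1 * err_neg g w).

(* \tilde R_{\hat w^*,n}(g)  (x / 0 = 0 by MathComp convention) *)
Definition risk_what (p : R) (g : T -> bool) (w : Omega) : R :=
  p / npos w * err_pos g w + (1 - p) / nneg w * err_neg g w.
End Risks.

(* Main.v *)
Require Import Defs.
From HB Require Import structures.
From mathcomp Require Import all_boot all_order all_algebra.
From mathcomp Require Import all_classical all_reals all_analysis.
From mathcomp Require Import ring lra.
Import Order.TTheory GRing.Theory Num.Theory.
Local Open Scope classical_set_scope.
Local Open Scope ring_scope.

Section Tail.
Variable R : realType.

Definition qf (r : R) (c x : bool) : R := if x == c then r else 1 - r.
Definition cnt n (c : bool) (b : {ffun 'I_n -> bool}) : R := \sum_(i < n | b i == c) 1.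

Arguments cnt {n}.

Lemma exp_aux (r s E : R) : 0 <= r <= 1 -> 0 <= s <= 1 -> 1 <= E ->
  E * (1 - s / 4) <= 1 ->
  r * (E - 1) - s / 4 * (r + s) <= - (s ^+ 2 / 8).
Proof.
move=> /andP[r0 r1] /andP[s0 s1] E1 hE.
set l := s / 4.
have l0 : 0 <= l by rewrite /l; lra.
have l1 : l <= 1/4 by rewrite /l; lra.
have h1 : (E - 1 - l) * (1 - l) <= l ^+ 2.
  have -> : (E - 1 - l) * (1 - l) = E * (1 - l) - 1 + l ^+ 2 by ring.
  rewrite /l; lra.
have h2 : E - 1 - l <= 4/3 * l ^+ 2 by nra.
have h3 : r * (E - 1 - l) <= 4/3 * l ^+ 2 by nra.
have -> : s = 4 * l by rewrite /l; lra.
nra.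
Qed.

Lemma tail_bound n (c : bool) (r s : R) : 0 <= r <= 1 -> 0 <= s <= 1 ->
  \sum_(b : {ffun 'I_n -> bool} | n%:R * (r + s) < cnt c b)
     \prod_(i < n) qf r c (b i) <= expR (- (n%:R * s ^+ 2 / 8)).
Proof.
move=> hr hs.
have q0 : forall x, 0 <= qf r c x.
  by move=> x; rewrite /qf; case: (x == c); move: hr => /andP[]; lra.
set l := s / 4.
have l0 : 0 <= l by rewrite /l; move: hs => /andP[]; lra.
pose K := n%:R * (r + s).
pose G x := qf r c x * expR (if x == c then l else 0).
have E1 : forall b : {ffun 'I_n -> bool}, (\prod_(i < n) qf r c (b i)) * expR (l * (cnt c b - K))
   = (\prod_(i < n) G (b i)) * expR (- (l * K)).
  move=> b; rewrite mulrBr expRD mulrA; congr (_ * _).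
  rewrite /cnt mulr_sumr expR_sum [X in _ * X]big_mkcond -big_split /=.
  apply: eq_bigr => i _; rewrite /G; case: ifP => _ /=.
    by rewrite (mulr1 l).
  by rewrite expR0 mulr1.
apply: (@le_trans _ _ (\sum_(b : {ffun 'I_n -> bool}) (\prod_(i < n) G (b i)) * expR (- (l * K)))).
  rewrite big_mkcond /=; apply: ler_sum => b _; rewrite -E1.
  have p0 : 0 <= \prod_(i < n) qf r c (b i) by apply: prodr_ge0.
  case: ifP => h.
    rewrite -[X in X <= _]mulr1 ler_wpM2l// -expR0 ler_expR.
    by apply: mulr_ge0 => //; rewrite subr_ge0 ltW.
  by apply: mulr_ge0 => //; exact: expR_ge0.

rewrite -mulr_suml -(bigA_distr_bigA (fun (_ : 'I_n) (j : bool) => G j)) /=.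
have SG : \sum_(x : bool) G x = r * expR l + (1 - r).
  rewrite big_bool /G /qf; case: (c) => /=; rewrite ?expR0 /=; lra.
under eq_bigr do rewrite SG.
rewrite prodr_const card_ord.
set E := expR l.
have Ege1 : 1 <= E by rewrite /E -expR0 ler_expR.
have m0 : 0 <= r * E + (1 - r) by move: hr => /andP[]; nra.
apply: (@le_trans _ _ (expR (r * (E - 1)) ^+ n * expR (- (l * K)))).
  rewrite ler_wpM2r ?expR_ge0 // lerXn2r// ?nnegrE ?expR_ge0//.
  by apply: le_trans (expR_ge1Dx _); lra.
rewrite -expRM_natl -expRD ler_expR /K.
have hE : E * (1 - s / 4) <= 1.
  have := expR_ge1Dx (- l); rewrite expRN -/E => h.
  have Ep : 0 < E by rewrite /E expR_gt0.
  have := ler_wpM2l (ltW Ep) h; rewrite mulfV ?gt_eqF// => h2.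
have := @exp_aux r s E hr hs Ege1 hE.
rewrite -/l => h.
have n0 : 0 <= n%:R :> R by [].
have := ler_wpM2l n0 h.
lra.
Qed.
End Tail.
Section Det.
Variable R : realType.

Lemma term_bound (a e N q c : R) : 0 <= e <= a -> 0 < N -> 0 < q -> 0 <= c ->
  `| c / a * e - c / q * (N^-1 * e) | <= c / q * `| a / N - q |.
Proof.
move=> /andP[e0 ea] N0 q0 c0.
have cq : 0 <= c / q by apply: divr_ge0 => //; exact: ltW.
have [a0|a0] := eqVneq a 0.
  rewrite a0 in ea *.
  have -> : e = 0 by apply/eqP; rewrite eq_le ea e0.
  by rewrite !mulr0 subr0 normr0 mulr_ge0.
have -> : c / a * e - c / q * (N^-1 * e) = c / q * (e / a) * (q - a / N).
  by field; rewrite a0 gt_eqF // gt_eqF.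
have ap : 0 < a by rewrite lt_neqAle eq_sym a0 (le_trans e0 ea).
have ea1 : 0 <= e / a <= 1.
  by rewrite divr_ge0 ?(ltW ap)//= ler_pdivrMr// mul1r.
rewrite (normrM (c / q * (e / a))) (normrM (c / q)) (ger0_norm cq) (ger0_norm (andP ea1).1) (distrC q).
rewrite -mulrA ler_wpM2l //.
by apply: ler_piMl => //; case/andP: ea1.
Qed.

Lemma det_bound (Omega T : Type) (n : nat) (X : 'I_n -> Omega -> T)
  (Y : 'I_n -> Omega -> bool) (p p' eps d : R) (g : T -> bool) (w : Omega) :
  (0 < n)%N -> 0 < p < 1 -> 0 < eps -> eps < p' < 1 - eps ->
  `| npos R Y w / n%:R - p' | <= d ->
  `| risk_what X Y p g w - risk_wstar X Y p p' g w | <= d / eps.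
Proof.
move=> n0 /andP[p0 p1] e0 /andP[pe1 pe2] hd.
set a := npos R Y w.
set N : R := n%:R.
have N0 : 0 < N by rewrite /N ltr0n.
have e1a : 0 <= err_pos R X Y g w <= a.
  rewrite /err_pos /a /npos; apply/andP; split.
    by apply: sumr_ge0 => i _; case: ifP.
  by apply: ler_sum => i _; case: ifP.
have Nsplit : N = a + \sum_(i < n | ~~ Y i w) 1.
  have S1 : \sum_(i < n) (1 : R) = n%:R by rewrite sumr_const card_ord.
  by rewrite /N /a /npos -S1 (bigID (fun i => Y i w)) /=.
have e2a : 0 <= err_neg R X Y g w <= nneg R Y w.
  rewrite /err_neg /nneg -/a -/N Nsplit addrAC subrr add0r; apply/andP; split.
    by apply: sumr_ge0 => i _; case: ifP.
  by apply: ler_sum => i _; case: ifP.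
have q1 : 0 < p' by lra.
have q2 : 0 < 1 - p' by lra.
have t1 := term_bound _ _ _ _ _ e1a N0 q1 (ltW p0).
have p1' : 0 <= 1 - p by lra.
have t2 := term_bound _ _ _ _ _ e2a N0 q2 p1'.
have eqd : nneg R Y w / N - (1 - p') = - (a / N - p').
  rewrite /nneg -/a -/N; field; rewrite gt_eqF //.
rewrite eqd normrN in t2.
rewrite /risk_what /risk_wstar -/a -/N.
set A1 := p / a * _. set A2 := (1 - p) / _ * _.
set B1 := p / p' * _. set B2 := (1 - p) / (1 - p') * _.
have -> : A1 + A2 - (B1 + B2) = (A1 - B1) + (A2 - B2) by ring.
apply: le_trans (ler_normD _ _) _.
have r1 : p / p' <= p / eps.
  by rewrite ler_wpM2l ?(ltW p0) // lef_pV2 ?posrE //; lra.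
have r2 : (1 - p) / (1 - p') <= (1 - p) / eps.
  by rewrite ler_wpM2l ?subr_ge0 ?(ltW p1) // lef_pV2 ?posrE //; lra.
have d0 : 0 <= `| a / N - p'| by [].
have : p / p' * `|a / N - p'| + (1 - p) / (1 - p') * `|a / N - p'| <= d / eps.
  apply: (@le_trans _ _ (p / eps * d + (1 - p) / eps * d)).
    apply: lerD.
      apply: le_trans (ler_wpM2r d0 r1) _; apply: ler_wpM2l => //.
      by apply: divr_ge0; lra.
    apply: le_trans (ler_wpM2r d0 r2) _; apply: ler_wpM2l => //.
    by apply: divr_ge0; lra.
  by rewrite -mulrDl -mulrDl (addrC p) subrK mul1r mulrC.
move: t1 t2; rewrite /A1 /A2 /B1 /B2 /nneg -/a -/N; lra.
Qed.
End Det.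

Lemma in_bigsetI (I : eqType) (T : Type) (s : seq I) (P : pred I) (F : I -> set T) w :
  (\big[setI/setT]_(j <- s | P j) F j) w <-> (forall j, j \in s -> P j -> F j w).
Proof.
elim: s => [|x s IH]; first by rewrite big_nil; split.
rewrite big_cons; case: ifP => Px; split.
- move=> [Fx /IH H] j; rewrite inE => /orP[/eqP -> //|js Pj]; exact: H.
- move=> H; split; first by apply: H; rewrite ?inE ?eqxx.
  by apply/IH => j js Pj; apply: H => //; rewrite inE js orbT.
- move=> /IH H j; rewrite inE => /orP[/eqP ->|js Pj]; first by rewrite Px.
  exact: H.
- by move=> H; apply/IH => j js Pj; apply: H => //; rewrite inE js orbT.
Qed.

Lemma in_bigsetU (I : eqType) (T : Type) (s : seq I) (P : pred I) (F : I -> set T) w :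
  (exists j, [/\ j \in s, P j & F j w]) -> (\big[setU/set0]_(j <- s | P j) F j) w.
Proof.
elim: s => [|x s IH]; first by case=> j []; rewrite in_nil.
case=> j [js Pj Fj]; rewrite big_cons; move: js; rewrite inE => /orP[/eqP ejx|js].
  by rewrite -ejx Pj; left.
by case: ifP => _; [right|]; apply: IH; exists j.
Qed.

Lemma measure_bigsetU_le d (T : measurableType d) (R : realType)
  (mu : {measure set T -> \bar R}) (I : Type) (s : seq I) (P : pred I)
  (F : I -> set T) : (forall i, measurable (F i)) ->
  (mu (\big[setU/set0]_(i <- s | P i) F i) <= \sum_(i <- s | P i) mu (F i))%E.
Proof.
move=> mF; elim: s => [|x s IH]; first by rewrite !big_nil measure0.
rewrite !big_cons; case: (P x) => //.
apply: le_trans (measureU2 _ _ _) _ => //; first exact: bigsetU_measurable.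
exact: leeD2l.
Qed.

Theorem lemma2 (R : realType)
  (dX : measure_display) (T : measurableType dX)
  (G : set (T -> bool)) (hG : forall g, G g -> measurable_fun setT g)
  (p : R) (hp : 0 < p < 1)
  (dO : measure_display) (Omega : measurableType dO) (P : probability Omega R)
  (X0 : Omega -> T) (Y0 : Omega -> bool)
  (mX0 : measurable_fun setT X0) (mY0 : measurable_fun setT Y0)
  (n : nat) (X : 'I_n -> Omega -> T) (Y : 'I_n -> Omega -> bool)
  (mX : forall i, measurable_fun setT (X i))
  (mY : forall i, measurable_fun setT (Y i))
  (hiid_ind : mutually_independent P (fun i w => (X i w, Y i w)))
  (hiid_dist : forall i, same_distribution P (fun w => (X i w, Y i w))
                                             (fun w => (X0 w, Y0 w)))
  (p' : R) (hp' : P [set w | Y0 w] = p'%:E)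
  (eps : R) (heps : 0 < eps < 1 / 2) (hp'eps : eps < p' < 1 - eps)
  (delta : R) (hdelta : 0 < delta < 1)
  (hn : 2 * ln (2 / delta) / eps ^+ 2 <= n%:R) :
  exists A : set Omega, measurable A /\ ((1 - delta)%:E <= P A)%E /\
    forall w, A w ->
      (ereal_sup [set (`| risk_what X Y p g w - risk_wstar X Y p p' g w |)%:E
                 | g in G]
       <= (2 / eps ^+ 2 * Num.sqrt (ln (2 / delta) / (2 * n%:R)))%:E)%E.
Proof.
have hp0 := hp.
move: hp => /andP[p0 p1]; move: heps => /andP[e0 e12].
move: hp'eps => /andP[pe1 pe2]; move: hdelta => /andP[d0 d1].
set L := ln (2 / delta) in hn *.
have L0 : 0 < L by rewrite /L ln_gt0 // ltr_pdivlMr // mul1r; lra.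
have e20 : 0 < eps ^+ 2 by exact: exprn_gt0.
have nR0 : 0 < n%:R :> R.
  by apply: lt_le_trans hn; apply: divr_gt0 => //; lra.
have n0 : (0 < n)%N by rewrite -(ltr0n R).
set t := Num.sqrt (L / (2 * n%:R)).
have Ln0 : 0 <= L / (2 * n%:R) by apply: divr_ge0; lra.
have t0 : 0 <= t := sqrtr_ge0 _.
have tt : t ^+ 2 = L / (2 * n%:R) by rewrite sqr_sqrtr.
set s := 2 / eps * t.
have s0 : 0 <= s by apply: mulr_ge0 => //; apply: divr_ge0; lra.
have s2 : s ^+ 2 = (2 * L / eps ^+ 2) / n%:R.
  by rewrite /s exprMn tt; field; rewrite !gt_eqF.
have s1 : s <= 1.
  have : s ^+ 2 <= 1 by rewrite s2 ler_pdivrMr // mul1r.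
  by nra.
have sdef : s / eps = 2 / eps ^+ 2 * t by rewrite /s; field; rewrite gt_eqF.
have ns : L <= n%:R * s ^+ 2 / 8.
  rewrite s2 (_ : n%:R * (2 * L / eps ^+ 2 / n%:R) / 8 = L / (4 * eps ^+ 2)).
    rewrite ler_pdivlMr; last by nra.
    have : eps ^+ 2 <= 1 / 4 by nra.
    nra.
  by field; rewrite !gt_eqF.
pose Z j w := (X j w, Y j w).
pose Yv w : {ffun 'I_n -> bool} := [ffun i => Y i w].
pose good (b : {ffun 'I_n -> bool}) := `| @cnt R n true b / n%:R - p' | <= s.
pose E (b : {ffun 'I_n -> bool}) :=
  \big[setI/setT]_(j in [set: 'I_n]%SET) (Z j @^-1` (setT `*` [set b j])).
pose Bset := \big[setU/set0]_(b | ~~ good b) E b.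
have preY : forall j x, Z j @^-1` (setT `*` [set x]) = Y j @^-1` [set x].
  by move=> j x; apply/seteqP; split => w /=; [case | move=> h; split].
have mpre : forall j x, measurable (Z j @^-1` (setT `*` [set x])).
  by move=> j x; rewrite preY -[X in measurable X]setTI; apply: mY.
have mE : forall b, measurable (E b).
  by move=> b; apply: bigsetI_measurable => j _; apply: mpre.
have memE : forall (b : {ffun 'I_n -> bool}) w, (forall j, Y j w = b j) -> E b w.
  move=> b w h; apply/in_bigsetI => j _ _; rewrite preY /=; exact: h.
have mB : measurable Bset by apply: bigsetU_measurable => b _; apply: mE.
have mY0t : measurable [set w | Y0 w].
  rewrite (_ : [set w | Y0 w] = Y0 @^-1` [set true]).
    by rewrite -[X in measurable X]setTI; apply: mY0.
  by apply/seteqP; split => w /=.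
have PZ : forall j x, P (Z j @^-1` (setT `*` [set x])) = (@qf R p' true x)%:E.
  move=> j x; rewrite (hiid_dist j); last by apply: measurableX.
  case: x; rewrite /qf /=.
    rewrite -hp'; congr (P _); apply/seteqP; split => w /=; first by case.
    by move=> ->.
  rewrite (_ : _ @^-1` _ = ~` [set w | Y0 w]); first by rewrite probability_setC // hp'.
  apply/seteqP; split => w /=; first by case=> _ ->.
  by move=> /negP; rewrite -eqbF_neg => /eqP.
have PE : forall b, P (E b) = (\prod_(j < n) @qf R p' true (b j))%:E.
  move=> b; rewrite /E (hiid_ind [set: 'I_n]%SET (fun j => setT `*` [set b j])); last by move=> j; apply: measurableX.
  rewrite -prodEFin; apply: eq_big; first by move=> j; rewrite finset.in_setT.
  by move=> j _; exact: PZ.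
have PB : (P Bset <= (2 * expR (- (n%:R * s ^+ 2 / 8)))%:E)%E.
  apply: le_trans (@measure_bigsetU_le _ _ _ P _ _ _ _ mE) _.
  rewrite (eq_bigr (fun b : {ffun 'I_n -> bool} => (\prod_(j < n) @qf R p' true (b j))%:E)); last first.
    by move=> b _; exact: PE.
  rewrite sumEFin lee_fin.
  pose F (b : {ffun 'I_n -> bool}) := \prod_(j < n) @qf R p' true (b j).
  have F0 : forall b, 0 <= F b.
    by move=> b; apply: prodr_ge0 => j _; rewrite /qf; case: (b j == true); lra.
  have cntS : forall b : {ffun 'I_n -> bool},
      @cnt R n true b + @cnt R n false b = n%:R.
    move=> b; have S1 : \sum_(i < n) (1 : R) = n%:R by rewrite sumr_const card_ord.
    rewrite -S1 (bigID (fun i => b i == true)) /=; congr (_ + _).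
    by apply: eq_bigl => i; case: (b i).
  pose up (b : {ffun 'I_n -> bool}) := n%:R * (p' + s) < @cnt R n true b.
  pose lo (b : {ffun 'I_n -> bool}) := n%:R * ((1 - p') + s) < @cnt R n false b.
  apply: (@le_trans _ _ (\sum_(b | up b) F b + \sum_(b | lo b) F b)).
    rewrite big_mkcond [X in _ <= X + _]big_mkcond [X in _ <= _ + X]big_mkcond.
    rewrite -big_split /=; apply: ler_sum => b _.
    case: ifP => gb; last by rewrite addr_ge0 //; case: ifP => _ //; apply: F0.
    have : up b || lo b.
      have kn : n%:R * (@cnt R n true b / n%:R) = @cnt R n true b.
        by rewrite mulrC divfK ?gt_eqF.
      have hc := cntS b.
      move: gb; rewrite /good -ltNge ltr_normr => /orP[h|h]; apply/orP; [left|right].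
        rewrite /up; nra.
      rewrite /lo; nra.
    by case/orP => ->; case: ifP => _; rewrite ?addr0 ?add0r ?lerDl ?lerDr //; apply: F0.
  have hq : forall x, @qf R p' true x = @qf R (1 - p') false x.
    by case; rewrite /qf /=; lra.
  have T1 := @tail_bound R n true p' s.
  have T2 := @tail_bound R n false (1 - p') s.
  rewrite mulr2n mulrDl mul1r.
  apply: lerD.
    by apply: T1; apply/andP; split; lra.
  rewrite (eq_bigr (fun b : {ffun 'I_n -> bool} => \prod_(j < n) @qf R (1 - p') false (b j))); last first.
    by move=> b _; apply: eq_bigr => j _; exact: hq.
  by apply: T2; apply/andP; split; lra.
have hd : 2 * expR (- (n%:R * s ^+ 2 / 8)) <= delta.
  have : expR (- (n%:R * s ^+ 2 / 8)) <= expR (- L) by rewrite ler_expR lerN2.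
  rewrite expRN /L lnK; last by rewrite posrE; apply: divr_gt0; lra.
  rewrite invf_div => h.
  have : 2 * expR (- (n%:R * s ^+ 2 / 8)) <= 2 * (delta / 2) by rewrite ler_pM2l.
  have -> : 2 * (delta / 2) = delta :> R by field.
  done.
exists (~` Bset); split; first exact: measurableC.
split.
  rewrite probability_setC //.
  have fB : P Bset \is a fin_num by rewrite fin_num_measure.
  rewrite -(fineK fB) -EFinB lee_fin lerD2l lerN2.
  rewrite -lee_fin fineK //; apply: le_trans PB _; rewrite lee_fin; exact: hd.
move=> w Aw.
have gw : good (Yv w).
  apply/negPn/negP => ngw; apply: Aw; apply: in_bigsetU; exists (Yv w); split => //.
  by apply: memE => j; rewrite ffunE.
have npE : npos R Y w = @cnt R n true (Yv w).
  by apply: eq_bigl => i; rewrite /Yv ffunE; case: (Y i w).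
apply: ge_ereal_sup => _ [g Gg <-]; rewrite lee_fin -sdef.
apply: det_bound => //; first by apply/andP.
by rewrite npE.
Qed.
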